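(* Let $A$ be the adjacency matrix of a graph $G=(V,E)$ on $p$ vertices having at least one edge. Let $\vartheta(\overline{G})$ denote the Lovász theta number of the complement $\overline{G}$ of $G$. Then \[ t_{pos}\ge\max\left\{1,\ -\lambda_{min}(A),\ \frac{-p\,\lambda_{min}(A)}{|E|},\ \frac{-p\,\lambda_{min}(A)}{t_{eb}},\ \frac{\lambda_{max}(A)}{\vartheta(\overline{G})-1}\right\}. \]
   Context: $A=(a_{i,j})$ is a self-adjoint $p\times p$ matrix with entries in $\{0,1\}$ and zero diagonal, and $E=\{(i,j): a_{i,j}=1\}$ (ordered pairs), so $G=(V,E)$ is the corresponding simple graph. $\lambda_{min}(A),\lambda_{max}(A)$ are the least and greatest eigenvalues of $A$. $S_A: M_p\to M_p$ is the Schur product map $S_A(X)=(a_{i,j}x_{i,j})$; $tr(X)=\frac1p\mathrm{Tr}(X)$; $\delta(X)=tr(X)I_p$; $\gamma_t=t\delta+S_A$ for real $t$. $t_{pos}=\min\{t:\gamma_t\text{ is a positive map}\}$ and $t_{eb}=\min\{t:\gamma_t\text{ is entanglement breaking}\}$, where $\phi:M_p\to M_p$ is entanglement breaking if $\phi(X)=\sum_k v_kw_k^*Xw_kv_k^*$ for finitely many vectors $w_k,v_k\in\mathbb{C}^p$. The Lovász theta number of $\overline{G}$ may be taken as $\vartheta(\overline{G})=\min\{\lambda_{max}(H): H=H^*\in M_p,\ H_{i,i}=1\ \forall i,\ H_{i,j}=1 \text{ whenever } a_{i,j}=1\}$. *)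

(* Defs.v *)
From mathcomp Require Import all_boot all_algebra.
From mathcomp Require Import reals.
From mathcomp.real_closed Require Import complex.
Set Implicit Arguments.
Unset Strict Implicit.
Unset Printing Implicit Defensive.
Import GRing.Theory Num.Theory.
Local Open Scope ring_scope.
Local Open Scope sesquilinear_scope.
Local Open Scope complex_scope.

Section Defs.
Variable R : realType.
Local Notation C := (R[i]).

Definition selfadjoint (p : nat) (X : 'M[C]_p) : Prop := X ^t* = X.

Definition psd (p : nat) (X : 'M[C]_p) : Prop :=
  selfadjoint X /\ forall v : 'cV[C]_p, 0 <= ((v ^t* *m X *m v) 0 0).

Definition positive_map (p : nat) (phi : 'M[C]_p -> 'M[C]_p) : Prop :=
  forall X, psd X -> psd (phi X).

Definition entanglement_breaking (p : nat) (phi : 'M[C]_p -> 'M[C]_p) : Prop :=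
  exists (n : nat) (v w : 'I_n -> 'cV[C]_p),
    forall X, phi X = \sum_(k < n) (v k *m (w k) ^t* *m X *m w k *m (v k) ^t*).

Definition is_lambda_min (p : nat) (X : 'M[C]_p) (l : R) : Prop :=
  eigenvalue X l%:C /\ forall a : C, eigenvalue X a -> l%:C <= a.
Definition is_lambda_max (p : nat) (X : 'M[C]_p) (l : R) : Prop :=
  eigenvalue X l%:C /\ forall a : C, eigenvalue X a -> a <= l%:C.

Definition is_min (P : R -> Prop) (t : R) : Prop :=
  P t /\ forall s, P s -> t <= s.

Definition adjmx (p : nat) (e : rel 'I_p) : 'M[C]_p :=
  \matrix_(i, j) (e i j)%:R.

(* edge set E as ordered pairs *)
Definition edges (p : nat) (e : rel 'I_p) : {set 'I_p * 'I_p} :=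
  [set ij | e ij.1 ij.2].

Definition schur (p : nat) (A X : 'M[C]_p) : 'M[C]_p :=
  \matrix_(i, j) (A i j * X i j).

Definition ntr (p : nat) (X : 'M[C]_p) : C := \tr X / p%:R.
Definition delta (p : nat) (X : 'M[C]_p) : 'M[C]_p := (ntr X)%:M.

Definition gamma (p : nat) (A : 'M[C]_p) (t : R) (X : 'M[C]_p) : 'M[C]_p :=
  t%:C *: delta X + schur A X.

Definition is_t_pos (p : nat) (A : 'M[C]_p) (t : R) : Prop :=
  is_min (fun s => positive_map (gamma A s)) t.
Definition is_t_eb (p : nat) (A : 'M[C]_p) (t : R) : Prop :=
  is_min (fun s => entanglement_breaking (gamma A s)) t.

(* feasible matrices in the theta-number program for the complement of G *)
Definition theta_feasible (p : nat) (e : rel 'I_p) (H : 'M[C]_p) : Prop :=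
  selfadjoint H /\ (forall i, H i i = 1) /\ (forall i j, e i j -> H i j = 1).

Definition is_theta_compl (p : nat) (e : rel 'I_p) (th : R) : Prop :=
  (exists H, theta_feasible e H /\ is_lambda_max H th) /\
  (forall H l, theta_feasible e H -> is_lambda_max H l -> th <= l).

End Defs.

(* Main.v *)
Require Import Defs.
From mathcomp Require Import all_boot all_algebra.
From mathcomp Require Import reals.
From mathcomp.real_closed Require Import complex.
From mathcomp Require Import ring lra zify.
Import GRing.Theory Num.Theory order.Order.TTheory.

Module Helpers.
Local Open Scope complex_scope.
Local Open Scope ring_scope.
Local Open Scope sesquilinear_scope.

Lemma qformE (R : realType) n (M : 'M[R[i]]_n) (v : 'cV[R[i]]_n) :
  (v ^t* *m M *m v) 0 0 = \sum_a \sum_b (v a 0)^* * M a b * v b 0.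
Proof.
rewrite mxE exchange_big /=; apply: eq_bigr => b _.
rewrite mxE mulr_suml; apply: eq_bigr => a _.
by rewrite !mxE.
Qed.

Lemma sum2 (R : realType) n (i j : 'I_n) (F : 'I_n -> R[i]) : i != j ->
  (forall k, k != i -> k != j -> F k = 0) -> \sum_k F k = F i + F j.
Proof.
move=> ij H; rewrite (bigD1 i) //= (bigD1 j) /=; last by rewrite eq_sym.
rewrite big1 ?addr0 // => k /andP[ki kj]; exact: H.
Qed.

Lemma psd_rank1 (R : realType) n (u : 'cV[R[i]]_n) : psd (u *m u ^t*).
Proof.
split.
  by rewrite /selfadjoint trmx_mul map_mxM trmxCK.
move=> v; rewrite qformE.
have -> : \sum_a \sum_b (v a 0)^* * (u *m u ^t*) a b * v b 0 =
   (\sum_a (v a 0)^* * u a 0) * (\sum_a (v a 0)^* * u a 0)^*.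
  rewrite rmorph_sum mulr_suml; apply: eq_bigr => a _.
  rewrite mulr_sumr; apply: eq_bigr => b _.
  rewrite mxE big_ord1 !mxE rmorphM /= conjCK (ord1 ord0); ring.
exact: mul_conjC_ge0.
Qed.

Lemma gammaE (R : realType) p (A : 'M[R[i]]_p) t X a b :
  gamma A t X a b = t%:C * ntr X * (a == b)%:R + A a b * X a b.
Proof. by rewrite !mxE !mulrnAr mulr1. Qed.

Lemma herm_psd (R : realType) n (H : 'M[R[i]]_n) (c : R[i]) :
  H ^t* = H -> (forall a, eigenvalue H a -> a <= c) -> c^* = c ->
  psd (c *: 1%:M - H).
Proof.
move=> Hsa Hev cr.
have Hh : H \is hermsymmx by apply/is_hermitianmxP; rewrite expr0 scale1r Hsa.
have /orthomx_spectralP HE := hermitian_normalmx Hh.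
set P := spectralmx H in HE; set d := spectral_diag H in HE.
have Pu : P \is unitarymx by exact: spectral_unitarymx.
have Punit : P \in unitmx by exact: spectral_unit.
have PiE : invmx P = P ^t* by exact: invmx_unitary.
have dev : forall k, d 0 k <= c.
  move=> k; apply: Hev; apply/eigenvalueP.
  exists ('e_k *m P).
    by rewrite {1}HE !mulmxA mulmxK // -(rowE k (diag_mx d)) row_diag_mx -scalemxAl.
  apply/negP => /eqP/(congr1 (mulmx^~ (invmx P))) /=; rewrite mulmxK // mul0mx.
  by move/matrixP/(_ 0 k); rewrite !mxE !eqxx /= => /eqP; rewrite oner_eq0.
split.
  apply/matrixP => a b; rewrite !mxE.
  have /matrixP/(_ a b) := Hsa; rewrite !mxE => <-.
  by rewrite rmorphB /= rmorphM /= cr rmorph_nat eq_sym.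
move=> v.
have -> : c *: 1%:M - H = P ^t* *m (c *: 1%:M - diag_mx d) *m P.
  by rewrite mulmxBr mulmxBl -PiE -HE -scalemxAr mulmx1 -scalemxAl mulVmx.
have -> : v ^t* *m (P ^t* *m (c *: 1%:M - diag_mx d) *m P) *m v =
    (P *m v) ^t* *m (c *: 1%:M - diag_mx d) *m (P *m v).
  by rewrite trmx_mul map_mxM !mulmxA.
rewrite qformE; apply: sumr_ge0 => a _.
rewrite (bigD1 a) //= big1 ?addr0.
  rewrite !mxE eqxx mulr1n -mulrA mulrC -mulrA; apply: mulr_ge0.
    by rewrite mulr1 mulr1n subr_ge0.
  exact: mul_conjC_ge0.
move=> b ba; rewrite !mxE eq_sym (negbTE ba) /= mulr0 mulr0n subr0.
by rewrite mulr0 mul0r.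
Qed.

Lemma adjE (R : realType) p (e : rel 'I_p) a b : adjmx R e a b = (e a b)%:R.
Proof. by rewrite mxE. Qed.

Lemma adj_tr (R : realType) p (e : rel 'I_p) : symmetric e ->
  (adjmx R e)^T = adjmx R e.
Proof. by move=> es; apply/matrixP => a b; rewrite !mxE es. Qed.

Lemma adj_sa (R : realType) p (e : rel 'I_p) : symmetric e ->
  (adjmx R e)^t* = adjmx R e.
Proof. by move=> es; apply/matrixP => a b; rewrite !mxE es rmorph_nat. Qed.

Lemma eigcol (R : realType) p (M : 'M[R[i]]_p) (l : R[i]) : M^T = M ->
  eigenvalue M l -> exists2 v : 'cV_p, M *m v = l *: v & v != 0.
Proof.
move=> Ms /eigenvalueP [r rM r0]; exists r^T.
  by rewrite -{1}Ms -trmx_mul rM linearZ.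
by rewrite trmx_eq0.
Qed.

Lemma normsq_gt0 (R : realType) p (v : 'cV[R[i]]_p) : v != 0 ->
  0 < (v^t* *m v) 0 0.
Proof.
move=> v0; rewrite mxE.
have [a va] : exists a, v a 0 != 0.
  apply/existsP; apply: contraR v0; rewrite negb_exists => /forallP H.
  apply/eqP/matrixP => a b; rewrite (ord1 b) mxE; exact/eqP/negPn/H.
rewrite (bigD1 a) //=; apply: ltr_wpDr.
  by apply: sumr_ge0 => b _; rewrite !mxE mulrC mul_conjC_ge0.
by rewrite !mxE mulrC mul_conjC_gt0.
Qed.

Lemma qform_eig (R : realType) p (M : 'M[R[i]]_p) (v : 'cV_p) (c l : R[i]) :
  M *m v = l *: v ->
  (v^t* *m (c *: 1%:M + M) *m v) 0 0 = (c + l) * (v^t* *m v) 0 0.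
Proof.
move=> Mv; rewrite mulmxDr mulmxDl scalemx1 mul_mx_scalar -scalemxAl.
rewrite -(mulmxA _ M) Mv -scalemxAr.
by rewrite !mxE mulrDl.
Qed.

Lemma qform_eigN (R : realType) p (M : 'M[R[i]]_p) (v : 'cV_p) (c l : R[i]) :
  M *m v = l *: v ->
  (v^t* *m (c *: 1%:M - M) *m v) 0 0 = (c - l) * (v^t* *m v) 0 0.
Proof.
move=> Mv; have Mv' : (- M) *m v = (- l) *: v by rewrite mulNmx Mv scaleNr.
by rewrite -(@qform_eig R p (- M) v c (- l) Mv').
Qed.

Lemma ntr_rank1_ones (R : realType) p : (0 < p)%N ->
  ntr (const_mx 1 *m (const_mx 1 : 'cV[R[i]]_p)^t* : 'M[R[i]]_p) = 1.
Proof.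
move=> p0; rewrite /ntr /mxtrace.
under eq_bigr do rewrite mxE big_ord1 !mxE rmorph1 mulr1.
by rewrite sumr_const card_ord divff // pnatr_eq0 -lt0n.
Qed.

Lemma rank1_ones_entry (R : realType) p a b :
  (const_mx 1 *m (const_mx 1 : 'cV[R[i]]_p)^t* : 'M[R[i]]_p) a b = 1.
Proof. by rewrite mxE big_ord1 !mxE rmorph1 mulr1. Qed.

Lemma tpos_ge_lmin (R : realType) p (e : rel 'I_p) (es : symmetric e)
  (ei : irreflexive e) (p0 : (0 < p)%N) (t l : R) :
  positive_map (gamma (adjmx R e) t) -> is_lambda_min (adjmx R e) l -> - l <= t.
Proof.
move=> Hpos [Hl _].
have [v Av v0] := @eigcol R p _ _ (@adj_tr R p e es) Hl.
have [_ /(_ v)] := Hpos _ (@psd_rank1 R p (const_mx 1)).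
have -> : gamma (adjmx R e) t (const_mx 1 *m (const_mx 1 : 'cV[R[i]]_p)^t*) = t%:C *: 1%:M + adjmx R e.
  apply/matrixP => a b; rewrite gammaE ntr_rank1_ones // rank1_ones_entry mulr1 mulr1.
  by rewrite !mxE mulr_natr.
rewrite (qform_eig _ _ _ _ t%:C _ Av) pmulr_lge0 ?normsq_gt0 // -rmorphD /= ler0c.
by move=> h; lra.
Qed.

Lemma tpos_ge_half (R : realType) p (e : rel 'I_p) (es : symmetric e)
  (ei : irreflexive e) (t : R) i j :
  positive_map (gamma (adjmx R e) t) -> e i j -> p%:R <= 2 * t.
Proof.
move=> Hpos eij.
have ij : i != j by apply: contraTneq eij => ->; rewrite ei.
have p0 : (0 < p)%N by case: p i {e es ei Hpos eij ij j} => [[]|].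
set u : 'cV[R[i]]_p := \col_k ((k == i)%:R + (k == j)%:R).
set v : 'cV[R[i]]_p := \col_k ((k == i)%:R - (k == j)%:R).
have [_ /(_ v)] := Hpos _ (@psd_rank1 R p u).
have ntrE : ntr (u *m u^t*) = 2%:R / p%:R.
  rewrite /ntr /mxtrace (@sum2 R p i j) //.
    rewrite !mxE !big_ord1 !mxE !eqxx (negbTE ij) eq_sym (negbTE ij).
    by rewrite !rmorphD /= !rmorph_nat; congr (_ / _); ring.
  by move=> k ki kj; rewrite !mxE big_ord1 !mxE (negbTE ki) (negbTE kj) add0r mul0r.
rewrite qformE (@sum2 R p i j) //; last first.
  by move=> k ki kj; apply: big1 => b _; rewrite !mxE (negbTE ki) (negbTE kj) subr0 rmorph0 !mul0r.
rewrite !(@sum2 R p i j) //; first last.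
- by move=> k ki kj; rewrite [v k 0]mxE (negbTE ki) (negbTE kj) subr0 mulr0.
- by move=> k ki kj; rewrite [v k 0]mxE (negbTE ki) (negbTE kj) subr0 mulr0.
rewrite !gammaE ntrE !mxE !big_ord1 !mxE !eqxx (negbTE ij) eq_sym (negbTE ij).
rewrite eij es eij !ei /= ?rmorphN /= ?rmorph1 ?rmorph0.
rewrite !(mulr1, mulr0, mul1r, mul0r, add0r, addr0, subr0, sub0r, rmorph1, rmorph0, rmorphN, opprK, mulrN, mulNr).
have -> : t%:C * (2 / p%:R) - 1 + (-1 + t%:C * (2 / p%:R)) =
   (t * 2 / p%:R - 1 + (-1 + t * 2 / p%:R))%:C.
  by rewrite !(rmorphD, rmorphB, rmorphN, rmorph1, rmorphM, fmorphV, rmorph_nat) /= mulrA.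
rewrite ler0c.
have pp : (0 : R) < p%:R by rewrite ltr0n.
move=> h; have : 0 <= t * 2 / p%:R - 1 by lra.
rewrite subr_ge0 ler_pdivlMr //; lra.
Qed.

Lemma mul_delta_entry (R : realType) p (M N : 'M[R[i]]_p) a b c d :
  (M *m delta_mx a b *m N) c d = M c a * N b d.
Proof.
rewrite mxE (bigD1 b) //= big1 ?addr0.
  rewrite mxE (bigD1 a) //= big1 ?addr0.
    by rewrite mxE !eqxx mulr1.
  by move=> k ka; rewrite mxE (negbTE ka) mulr0.
move=> k kb; rewrite mxE big1 ?mul0r // => z _.
by rewrite mxE (negbTE kb) andbF mulr0.
Qed.

Lemma ntr_delta (R : realType) p (a b : 'I_p) :
  ntr (delta_mx a b : 'M[R[i]]_p) = (a == b)%:R / p%:R.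
Proof.
rewrite /ntr /mxtrace (bigD1 a) //= big1 ?addr0; first by rewrite mxE eqxx.
by move=> k ka; rewrite mxE (negbTE ka).
Qed.

Lemma teb_ge_p (R : realType) p (e : rel 'I_p) (es : symmetric e)
  (ei : irreflexive e) (t : R) i j :
  entanglement_breaking (gamma (adjmx R e) t) -> e i j -> p%:R <= t.
Proof.
move=> [n [v [w Hg]]] eij.
have ij : i != j by apply: contraTneq eij => ->; rewrite ei.
have p0 : (0 < p)%N by case: p i {e es ei Hg eij ij j v w} => [[]|].
pose M k := v k *m (w k)^t*.
have HgE : forall a b c d, gamma (adjmx R e) t (delta_mx a b) c d =
    \sum_(k < n) M k c a * (M k d b)^*.
  move=> a b c d; rewrite Hg summxE; apply: eq_bigr => k _.
  have -> : v k *m (w k)^t* *m delta_mx a b *m w k *m (v k)^t* =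
      M k *m delta_mx a b *m (w k *m (v k)^t*) by rewrite !mulmxA.
  rewrite mul_delta_entry /M !mxE !big_ord1 !mxE rmorphM /= conjCK.
  ring.
have key : 0 <= \sum_(k < n) (M k i i - M k j j) * (M k i i - M k j j)^*.
  by apply: sumr_ge0 => k _; exact: mul_conjC_ge0.
have E : \sum_(k < n) (M k i i - M k j j) * (M k i i - M k j j)^* =
   gamma (adjmx R e) t (delta_mx i i) i i + gamma (adjmx R e) t (delta_mx j j) j j
   - gamma (adjmx R e) t (delta_mx i j) i j - gamma (adjmx R e) t (delta_mx j i) j i.
  rewrite !HgE -big_split -!sumrB /=; apply: eq_bigr => k _.
  rewrite rmorphB /=; ring.
move: key; rewrite E !gammaE !ntr_delta !mxE !eqxx (negbTE ij) eq_sym (negbTE ij).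
rewrite eij es eij !ei /= !(mulr1, mulr0, mul1r, mul0r, addr0, add0r).
have -> : t%:C / p%:R + t%:C / p%:R - 1 - 1 = (t / p%:R + t / p%:R - 1 - 1)%:C.
  by rewrite !(rmorphD, rmorphB, rmorphN, rmorph1, rmorphM, fmorphV, rmorph_nat).
rewrite ler0c.
have pp : (0 : R) < p%:R by rewrite ltr0n.
move=> h; have : 1 <= t / p%:R by lra.
by rewrite ler_pdivlMr // mul1r.
Qed.

Lemma qform_delta (R : realType) p (M : 'M[R[i]]_p) (i : 'I_p) :
  ((delta_mx i 0 : 'cV[R[i]]_p)^t* *m M *m (delta_mx i 0 : 'cV[R[i]]_p)) 0 0 = M i i.
Proof.
rewrite qformE (bigD1 i) //= [X in _ + X]big1 ?addr0.
  rewrite (bigD1 i) //= [X in _ + X]big1 ?addr0.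
    by rewrite !mxE !eqxx /= rmorph1 mul1r mulr1.
  by move=> k ki; rewrite !mxE (negbTE ki) mulr0.
by move=> k ki; apply: big1 => b _; rewrite !mxE (negbTE ki) rmorph0 !mul0r.
Qed.

Lemma theta_ge1 (R : realType) p (e : rel 'I_p) (H : 'M[R[i]]_p) (th : R) (i : 'I_p) :
  theta_feasible e H -> is_lambda_max H th -> 1 <= th.
Proof.
move=> [Hsa [Hd _]] [_ Hev].
have [_ /(_ (delta_mx i 0))] := @herm_psd R p H th%:C Hsa Hev (conjc_real th).
rewrite qform_delta !mxE eqxx mulr1 Hd subr_ge0.
by rewrite -lecR rmorph1.
Qed.

Lemma tpos_theta (R : realType) p (e : rel 'I_p) (es : symmetric e)
  (ei : irreflexive e) (p0 : (0 < p)%N) (t th l : R) H :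
  positive_map (gamma (adjmx R e) t) -> theta_feasible e H -> is_lambda_max H th ->
  is_lambda_max (adjmx R e) l -> l <= t * (th - 1).
Proof.
move=> Hpos [Hsa [Hd He]] [_ Hev] [Hl _].
have [v Av v0] := @eigcol R p _ _ (@adj_tr R p e es) Hl.
have [_ /(_ v)] := Hpos _ (@herm_psd R p H th%:C Hsa Hev (conjc_real th)).
have ntrE : ntr (th%:C *: 1%:M - H) = (th - 1)%:C.
  rewrite /ntr /mxtrace.
  under eq_bigr do rewrite !mxE eqxx mulr1 Hd.
  rewrite sumr_const card_ord -[(_ - 1) *+ p]mulr_natr mulfK ?pnatr_eq0 -?lt0n //.
  by rewrite rmorphB rmorph1.
have -> : gamma (adjmx R e) t (th%:C *: 1%:M - H) = (t * (th - 1))%:C *: 1%:M - adjmx R e.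
  apply/matrixP => a b; rewrite gammaE ntrE !mxE.
  have [->|ab] := eqVneq a b.
    by rewrite ei /= !mul0r !mulr1 addr0 subr0 rmorphM.
  rewrite /= !mulr0 add0r sub0r.
  case eab: (e a b) => /=; first by rewrite He // mul1r sub0r.
  by rewrite !mul0r subr0.
rewrite (qform_eigN _ _ _ _ _ _ Av) pmulr_lge0 ?normsq_gt0 // -rmorphB /= ler0c.
by rewrite subr_ge0.
Qed.

Lemma card_edgesE (R : realType) p (e : rel 'I_p) :
  (#|edges e|%:R : R[i]) = \sum_a \sum_b (e a b)%:R.
Proof.
rewrite pair_bigA /= -sum1_card natr_sum big_mkcond /=.
by apply: eq_bigr => ab _; rewrite /edges inE; case: (e _ _).
Qed.

Lemma lmin_edges (R : realType) p (e : rel 'I_p) (es : symmetric e)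
  (ei : irreflexive e) (l : R) :
  is_lambda_min (adjmx R e) l -> 0 <= (#|edges e|%:R + 2 * l).
Proof.
move=> [Hl _].
have [v Av v0] := @eigcol R p _ _ (@adj_tr R p e es) Hl.
set S := (v^t* *m v) 0 0.
have S0 : 0 < S by exact: normsq_gt0.
have SE : S = \sum_a (v a 0)^* * v a 0 by rewrite /S mxE; apply: eq_bigr => a _; rewrite !mxE.
have T1 : \sum_a \sum_b (v a 0)^* * (e a b)%:R * v b 0 = l%:C * S.
  have h : (v^t* *m adjmx R e *m v) 0 0 = l%:C * S by rewrite -mulmxA Av -scalemxAr mxE.
  rewrite qformE in h; rewrite -h; apply: eq_bigr => a _; apply: eq_bigr => b _.
  by rewrite adjE.
have T2 : \sum_a \sum_b v a 0 * (e a b)%:R * (v b 0)^* = l%:C * S.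
  rewrite -T1 exchange_big /=; apply: eq_bigr => a _; apply: eq_bigr => b _.
  by rewrite es; ring.
have ab_le : forall a b, (e a b)%:R * ((v a 0 + v b 0) * (v a 0 + v b 0)^*) <=
    (e a b)%:R * S + ((v a 0)^* * (e a b)%:R * v b 0 + v a 0 * (e a b)%:R * (v b 0)^*).
  move=> a b; case eab: (e a b); last by rewrite /= !mul0r !mulr0 !add0r !mul0r addr0.
  have ab : a != b by apply: contraTneq eab => ->; rewrite ei.
  rewrite /= !mul1r !mulr1 rmorphD /=.
  have -> : (v a 0 + v b 0) * ((v a 0)^* + (v b 0)^*) =
     (v a 0 * (v a 0)^* + v b 0 * (v b 0)^*) + ((v a 0)^* * v b 0 + v a 0 * (v b 0)^*) by ring.
  rewrite lerD2r SE (bigD1 a) //= (bigD1 b) //=; last by rewrite eq_sym.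
  rewrite addrA [v a 0 * _]mulrC [v b 0 * _]mulrC lerDl.
  by apply: sumr_ge0 => k _; rewrite mulrC mul_conjC_ge0.
have key : 0 <= \sum_a \sum_b (e a b)%:R * ((v a 0 + v b 0) * (v a 0 + v b 0)^*).
  by apply: sumr_ge0 => a _; apply: sumr_ge0 => b _; apply: mulr_ge0; rewrite ?ler0n ?mul_conjC_ge0.
have : 0 <= (#|edges e|%:R + 2 * l)%:C * S.
  apply: (le_trans key).
  apply: le_trans (ler_sum _ (fun a _ => ler_sum _ (fun b _ => ab_le a b))) _.
  rewrite le_eqVlt; apply/orP; left; apply/eqP.
  under eq_bigr => a _ do rewrite big_split /= big_split /=.
  rewrite !big_split /= T1 T2 rmorphD rmorphM /= !rmorph_nat card_edgesE mulrDl.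
  rewrite mulr_suml; congr (_ + _); last by ring.
  by apply: eq_bigr => a _; rewrite mulr_suml.
by rewrite pmulr_lge0 // ler0c.
Qed.

End Helpers.
Import Helpers.

Local Open Scope ring_scope.

Theorem mainTheorem11 (R : realType) (p : nat) (e : rel 'I_p)
  (e_sym : symmetric e) (e_irr : irreflexive e)
  (e_edge : exists i j, e i j)
  (tpos teb th lmin lmax : R) :
  is_t_pos (adjmx R e) tpos ->
  is_t_eb (adjmx R e) teb ->
  is_theta_compl e th ->
  is_lambda_min (adjmx R e) lmin ->
  is_lambda_max (adjmx R e) lmax ->
  [/\ 1 <= tpos,
      - lmin <= tpos,
      - (p%:R * lmin) / (#|edges e|)%:R <= tpos,
      - (p%:R * lmin) / teb <= tpos
    & lmax / (th - 1) <= tpos].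
Proof.
move=> [Hpos _] [Heb _] [[H [Hf Hth]] _] Hmin Hmax.
have [i [j eij]] := e_edge.
have ij : i != j by apply: contraTneq eij => ->; rewrite e_irr.
have p2 : (2 <= p)%N.
  have := ltn_ord i; have := ltn_ord j; move: ij; rewrite -val_eqE /=; lia.
have p0 : (0 < p)%N by apply: leq_trans p2.
have p2R : (2 : R) <= p%:R by rewrite (ler_nat R 2 p).
have h1 := tpos_ge_half R p e e_sym e_irr tpos i j Hpos eij.
have h2 := tpos_ge_lmin R p e e_sym e_irr p0 tpos lmin Hpos Hmin.
have h3 := lmin_edges R p e e_sym e_irr lmin Hmin.
have h4 := teb_ge_p R p e e_sym e_irr teb i j Heb eij.
have h5 := theta_ge1 R p e H th i Hf Hth.
have h6 := tpos_theta R p e e_sym e_irr p0 tpos th lmax H Hpos Hf Hth Hmax.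
have E0 : (0 : R) < #|edges e|%:R.
  rewrite ltr0n card_gt0; apply/set0Pn; exists (i, j); by rewrite inE.
have t1 : 1 <= tpos by lra.
split => //.
- rewrite ler_pdivrMr //.
  have := mulr_ge0 (ltW (lt_le_trans (ltr0Sn R 1) p2R)) h3.
  have : 0 <= #|edges e|%:R * (2 * tpos - p%:R) :> R.
    by apply: mulr_ge0; lra.
  move=> a b; nra.
- have teb0 : 0 < teb by lra.
  rewrite ler_pdivrMr //.
  have : 0 <= (teb - p%:R) * tpos :> R by apply: mulr_ge0; lra.
  have : 0 <= p%:R * (tpos + lmin) :> R by apply: mulr_ge0; lra.
  move=> a b; nra.
- have [th1|th1] := eqVneq th 1.
    by rewrite th1 subrr invr0 mulr0; lra.
  have : 0 < th - 1 by rewrite subr_gt0 lt_def th1 h5.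
  by move=> th0; rewrite ler_pdivrMr.
Qed.
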